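(* Let $\mathcal{A}$ be an infinite-dimensional separable Hilbert space with orthonormal basis $\{e_i\}_{i\in\mathbb{N}}$ and let $\{c_{ki}\}_{i,k\in\mathbb{N}}$ be scalars satisfying $$K:=\sup_{i\in\mathbb{N}}\sum_{k=1}^{\infty}|c_{ki}|^2<\infty.$$ Then the product $v\cdot w:=\sum_{k=1}^{\infty}\big(\sum_{i=1}^{\infty}v_iw_ic_{ki}\big)e_k$ (for $v=\sum_iv_ie_i$, $w=\sum_iw_ie_i$) is well defined on $\mathcal{A}$ and makes $\mathcal{A}$ a Hilbert evolution algebra with orthonormal natural basis $\{e_i\}$ and structure constants $c_{ki}$.
   Context: A (separable) Hilbert evolution algebra is a real or complex separable Hilbert space $(\mathcal{A},\langle\cdot,\cdot\rangle)$ equipped with a bilinear product $\cdot:\mathcal{A}\times\mathcal{A}\to\mathcal{A}$ such that: (i) there exist an orthonormal basis $\{e_i\}_{i\in\mathbb{N}}$ (called an orthonormal natural basis) and scalars $\{c_{ki}\}_{i,k\in\mathbb{N}}$ (the structure constants) with $e_i\cdot e_i=\sum_{k=1}^\infty c_{ki}e_k$ and $e_i\cdot e_j=0$ for $i\neq j$; (ii) for every $v\in\mathcal{A}$ the left multiplication $L_v:\mathcal{A}\to\mathcal{A}$, $L_v(w)=v\cdot w$, is continuous, i.e. there is $M_v>0$ with $\|L_v(w)\|\le M_v\|w\|$ for all $w\in\mathcal{A}$. *)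

(* Defs.v *)
From HB Require Import structures.
From mathcomp Require Import all_boot all_order all_algebra.
From mathcomp Require Import complex.
From mathcomp Require Import reals.
Set Implicit Arguments. Unset Strict Implicit. Unset Printing Implicit Defensive.
Import Order.TTheory GRing.Theory Num.Theory.
Local Open Scope ring_scope.

Section HilbertDefs.
Variables (K : numFieldType) (cj : K -> K) (V : lmodType K) (ip : V -> V -> K).

Definition kconv (s : nat -> K) (l : K) : Prop :=
  forall eps : K, 0 < eps -> exists N : nat,
    forall n : nat, (N <= n)%N -> `|s n - l| < eps.

Definition nsq (v : V) : K := ip v v.

Definition vconv (s : nat -> V) (l : V) : Prop :=
  forall eps : K, 0 < eps -> exists N : nat,
    forall n : nat, (N <= n)%N -> nsq (s n - l) < eps.

Definition vcauchy (s : nat -> V) : Prop :=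
  forall eps : K, 0 < eps -> exists N : nat,
    forall m n : nat, (N <= m)%N -> (N <= n)%N -> nsq (s m - s n) < eps.

(* (V, ip) is a Hilbert space over K, where cj is the conjugation of K
   (identity for real scalars, complex conjugation for complex scalars). *)
Definition hilbert_space : Prop :=
  [/\ (forall (a : K) (u v w : V), ip (a *: u + v) w = a * ip u w + ip v w),
      (forall u v : V, ip v u = cj (ip u v)),
      (forall v : V, 0 <= ip v v),
      (forall v : V, ip v v = 0 -> v = 0) &
      (forall s : nat -> V, vcauchy s -> exists l : V, vconv s l)].

Definition orthonormal_basis (e : nat -> V) : Prop :=
  (forall i j : nat, ip (e i) (e j) = (i == j)%:R) /\
  (forall v : V, vconv (fun n => \sum_(i < n) ip v (e i) *: e i) v).

Definition hilbert_evolution_algebra (prod : V -> V -> V)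
    (e : nat -> V) (c : nat -> nat -> K) : Prop :=
  [/\ hilbert_space,
      orthonormal_basis e &
  [/\
      (forall (a : K) (u v w : V), prod (a *: u + v) w = a *: prod u w + prod v w),
      (forall (a : K) (u v w : V), prod u (a *: v + w) = a *: prod u v + prod u w),
      (forall i : nat, vconv (fun n => \sum_(k < n) c k i *: e k) (prod (e i) (e i))),
      (forall i j : nat, i != j -> prod (e i) (e j) = 0) &
      (* continuity of every left multiplication: ||v.w|| <= M_v ||w||,
         written with squared norms *)
      (forall v : V, exists M : K, 0 < M /\
         forall w : V, nsq (prod v w) <= M ^+ 2 * nsq w)]].

Definition theorem_for : Prop :=
  forall (e : nat -> V) (c : nat -> nat -> K),
    hilbert_space -> orthonormal_basis e ->
    (* K := sup_i sum_k |c_{ki}|^2 < oo *)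
    (exists B : K, forall (i n : nat), \sum_(k < n) `|c k i| ^+ 2 <= B) ->
    exists prod : V -> V -> V,
      (forall v w : V, exists a : nat -> K,
         (forall k : nat,
            kconv (fun n => \sum_(i < n) ip v (e i) * ip w (e i) * c k i) (a k)) /\
         vconv (fun n => \sum_(k < n) a k *: e k) (prod v w)) /\
      hilbert_evolution_algebra prod e c.

End HilbertDefs.

(* Main.v *)
Require Import Defs.
From HB Require Import structures.
From mathcomp Require Import all_boot all_order all_algebra.
From mathcomp Require Import complex.
From mathcomp Require Import classical_sets reals.
From mathcomp Require Import ring lra.
From Stdlib Require Import ClassicalEpsilon.
Import Order.TTheory GRing.Theory Num.Theory.
Local Open Scope ring_scope.
Section RealLemmas.
Variable R : realType.

Lemma mono_cauchy (s : nat -> R) (B : R) :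
  (forall n, s n <= s n.+1) -> (forall n, s n <= B) ->
  forall eps : R, 0 < eps -> exists N, forall m n, (N <= m)%N -> (m <= n)%N -> s n - s m < eps.
Proof.
move=> Hm HB eps he.
have mono : forall m n, (m <= n)%N -> s m <= s n.
  move=> m n /subnK <-; elim: (n - m)%N => [|k IH]; first by rewrite add0n.
  by rewrite addSn (le_trans IH).
pose E : set R := fun x => exists n, x = s n.
have hs : has_sup E.
  split; first by exists (s 0%N), 0%N.
  by exists B => x [n ->].
have [x [N ->] hN] := sup_adherent he hs.
exists N => m n hm hmn.
have h1 : s n <= sup E by apply: sup_upper_bound => //; exists n.
have h2 := mono _ _ hm.
lra.
Qed.

Lemma CS_nat (a b : nat -> R) m n :
  (forall i, 0 <= a i) -> (forall i, 0 <= b i) ->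
  (\sum_(m <= i < n) a i * b i) ^+ 2 <=
  (\sum_(m <= i < n) a i ^+ 2) * (\sum_(m <= i < n) b i ^+ 2).
Proof.
move=> ha hb; elim: n => [|n IH]; first by rewrite !big_geq.
case: (leqP m n) => hmn; last by rewrite !big_geq.
rewrite !big_nat_recr //=.
set S := \sum_(m <= i < n) a i * b i.
set A := \sum_(m <= i < n) a i ^+ 2.
set T := \sum_(m <= i < n) b i ^+ 2.
have S0 : 0 <= S by apply: sumr_ge0 => i _; apply: mulr_ge0.
have A0 : 0 <= A by apply: sumr_ge0 => i _; apply: sqr_ge0.
have T0 : 0 <= T by apply: sumr_ge0 => i _; apply: sqr_ge0.
have {}IH : S ^+ 2 <= A * T := IH.
have := ha n; have := hb n; move: IH; set x := a n; set y := b n => IH y0 x0.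
have key : 2 * S * (x * y) <= A * y ^+ 2 + T * x ^+ 2.
  have h : (2 * S * (x * y)) ^+ 2 <= (A * y ^+ 2 + T * x ^+ 2) ^+ 2.
    have h0 : 0 <= (A * y ^+ 2 - T * x ^+ 2) ^+ 2 by apply: sqr_ge0.
    have h1 : S ^+ 2 * (x ^+ 2 * y ^+ 2) <= (A * T) * (x ^+ 2 * y ^+ 2).
      by rewrite ler_wpM2r // mulr_ge0 ?sqr_ge0.
    have -> : (2 * S * (x * y)) ^+ 2 = 4 * (S ^+ 2 * (x ^+ 2 * y ^+ 2)) by ring.
    have -> : (A * y ^+ 2 + T * x ^+ 2) ^+ 2 = (A * y ^+ 2 - T * x ^+ 2) ^+ 2 + 4 * ((A * T) * (x ^+ 2 * y ^+ 2)) by ring.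
    lra.
  rewrite -ler_sqr ?nnegrE //; last by rewrite addr_ge0 // mulr_ge0 ?sqr_ge0.
  by rewrite !mulr_ge0.
have -> : (S + x * y) ^+ 2 = S ^+ 2 + 2 * S * (x * y) + x ^+ 2 * y ^+ 2 by ring.
have -> : (A + x ^+ 2) * (T + y ^+ 2) = A * T + (A * y ^+ 2 + T * x ^+ 2) + x ^+ 2 * y ^+ 2 by ring.
lra.
Qed.

Lemma WCS_nat (P x : nat -> R) m n :
  (forall i, 0 <= P i) -> (forall i, 0 <= x i) ->
  (\sum_(m <= i < n) P i * x i) ^+ 2 <=
  (\sum_(m <= i < n) P i) * (\sum_(m <= i < n) P i * x i ^+ 2).
Proof.
move=> ha hb; elim: n => [|n IH]; first by rewrite !big_geq.
case: (leqP m n) => hmn; last by rewrite !big_geq.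
rewrite !big_nat_recr //=.
set S := \sum_(m <= i < n) P i * x i.
set A := \sum_(m <= i < n) P i.
set T := \sum_(m <= i < n) P i * x i ^+ 2.
have S0 : 0 <= S by apply: sumr_ge0 => i _; apply: mulr_ge0.
have A0 : 0 <= A by apply: sumr_ge0 => i _.
have T0 : 0 <= T by apply: sumr_ge0 => i _; rewrite mulr_ge0 ?sqr_ge0.
have {}IH : S ^+ 2 <= A * T := IH.
have := ha n; have := hb n; move: IH; set p := P n; set y := x n => IH y0 p0.
have key : 2 * S * y <= A * y ^+ 2 + T.
  have h : (2 * S * y) ^+ 2 <= (A * y ^+ 2 + T) ^+ 2.
    have h0 : 0 <= (A * y ^+ 2 - T) ^+ 2 by apply: sqr_ge0.
    have h1 : S ^+ 2 * y ^+ 2 <= (A * T) * y ^+ 2.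
      by rewrite ler_wpM2r // sqr_ge0.
    have -> : (2 * S * y) ^+ 2 = 4 * (S ^+ 2 * y ^+ 2) by ring.
    have -> : (A * y ^+ 2 + T) ^+ 2 = (A * y ^+ 2 - T) ^+ 2 + 4 * ((A * T) * y ^+ 2) by ring.
    lra.
  rewrite -ler_sqr ?nnegrE //; last by rewrite addr_ge0 // mulr_ge0 ?sqr_ge0.
  by rewrite !mulr_ge0.
have h : 0 <= p * (A * y ^+ 2 + T - 2 * S * y) by rewrite mulr_ge0 // subr_ge0.
have -> : (S + p * y) ^+ 2 = S ^+ 2 + p * (2 * S * y) + p * (p * y ^+ 2) by ring.
have -> : (A + p) * (T + p * y ^+ 2) = A * T + p * (A * y ^+ 2 + T) + p * (p * y ^+ 2) by ring.
have e1 : p * (A * y ^+ 2 + T - 2 * S * y) = p * (A * y ^+ 2 + T) - p * (2 * S * y) by ring.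
rewrite e1 in h.
lra.
Qed.

Lemma le_eps (x y : R) : (forall eps, 0 < eps -> x <= y + eps) -> x <= y.
Proof. by move=> h; apply/ler_addgt0Pr. Qed.

End RealLemmas.
Section MoreReal.
Variable R : realType.

Lemma small_pos (d : R) : 0 < d -> exists del : R, [/\ 0 < del, del <= 1 & del <= d].
Proof.
move=> hd; case: (lerP d 1) => h; first by exists d.
by exists 1; split => //; apply: ltW.
Qed.

Lemma sq_lt (x y : R) : 0 <= x -> 0 <= y -> x ^+ 2 < y ^+ 2 -> x < y.
Proof. by move=> hx hy; rewrite ltr_sqr ?nnegrE. Qed.

Lemma sq_le (x y : R) : 0 <= x -> 0 <= y -> x <= y -> x ^+ 2 <= y ^+ 2.
Proof. by move=> hx hy; rewrite ler_sqr ?nnegrE. Qed.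

End MoreReal.

Lemma sum_split (T : zmodType) (F : nat -> T) m n : (m <= n)%N ->
  \sum_(m <= i < n) F i = \sum_(0 <= i < n) F i - \sum_(0 <= i < m) F i.
Proof. by move=> h; rewrite (@big_cat_nat _ _ _ m 0 n _ _ (leq0n m) h) /= addrC addrK. Qed.

Lemma unif_fin (Q : nat -> nat -> Prop) :
  (forall k, exists n0, forall n, (n0 <= n)%N -> Q k n) ->
  forall N, exists n0, forall k n, (k < N)%N -> (n0 <= n)%N -> Q k n.
Proof.
move=> H; elim=> [|N [n1 IH]]; first by exists 0%N.
have [n2 H2] := H N; exists (maxn n1 n2) => k n hk; rewrite geq_max => /andP[h1 h2].
rewrite ltnS leq_eqVlt in hk; case/orP: hk => [/eqP ->|hk]; first exact: H2.
exact: IH.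
Qed.
Section Gen.
Variables (R : realType) (K : numFieldType) (emb : {rmorphism R -> K}) (nK : K -> R) (cj : K -> K).
Hypotheses (normE : forall x, `|x| = emb (nK x))
 (emb_le : forall r s, (emb r <= emb s) = (r <= s))
 (emb_lt : forall r s, (emb r < emb s) = (r < s))
 (cjD : forall x y, cj (x + y) = cj x + cj y)
 (cjM : forall x y, cj (x * y) = cj x * cj y)
 (cjK : forall x, cj (cj x) = x)
 (cj_emb : forall r, cj (emb r) = emb r)
 (mulcj : forall x, x * cj x = emb (nK x ^+ 2)).

Lemma emb_inj : injective emb.
Proof. by move=> r s h; apply/eqP; rewrite eq_le -!emb_le h lexx. Qed.

Lemma nK_ge0 x : 0 <= nK x.
Proof. by rewrite -emb_le rmorph0 -normE. Qed.

Lemma nKM x y : nK (x * y) = nK x * nK y.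
Proof. by apply: emb_inj; rewrite rmorphM -!normE normrM. Qed.

Lemma nK0 : nK 0 = 0.
Proof. by apply: emb_inj; rewrite rmorph0 -normE normr0. Qed.

Lemma nK_eq0 x : nK x = 0 -> x = 0.
Proof. by move=> h; apply/eqP; rewrite -normr_eq0 normE h rmorph0. Qed.

Lemma nKD x y : nK (x + y) <= nK x + nK y.
Proof. by rewrite -emb_le rmorphD -!normE ler_normD. Qed.

Lemma nKN x : nK (- x) = nK x.
Proof. by apply: emb_inj; rewrite -!normE normrN. Qed.

Lemma nKB x y : nK (x - y) = nK (y - x).
Proof. by rewrite -nKN opprB. Qed.

Lemma ge0_emb x : 0 <= x -> x = emb (nK x).
Proof. by move=> h; rewrite -normE ger0_norm. Qed.

Lemma nK_emb r : 0 <= r -> nK (emb r) = r.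
Proof.
move=> h; apply: emb_inj; rewrite -ge0_emb //.
by rewrite -(rmorph0 emb) emb_le.
Qed.

Lemma nK1 : nK 1 = 1.
Proof. by rewrite -(rmorph1 emb) nK_emb. Qed.

Lemma nK_sum (F : nat -> K) m n : nK (\sum_(m <= i < n) F i) <= \sum_(m <= i < n) nK (F i).
Proof.
elim: n => [|n IH]; first by rewrite !big_geq // nK0.
case: (leqP m n) => h; last by rewrite !big_geq // nK0.
by rewrite !big_nat_recr //= (le_trans (nKD _ _)) // lerD2r.
Qed.

Lemma cj0 : cj 0 = 0.
Proof. by apply: (@addrI _ (cj 0)); rewrite -cjD !addr0. Qed.

Lemma cjN x : cj (- x) = - cj x.
Proof. by apply: (@addrI _ (cj x)); rewrite -cjD !subrr cj0. Qed.

Lemma cj1 : cj 1 = 1.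
Proof. by rewrite -(rmorph1 emb) cj_emb. Qed.

Lemma cj_nat n : cj n%:R = n%:R.
Proof. by rewrite -(rmorph_nat emb) cj_emb. Qed.

Variables (V : lmodType K) (ip : V -> V -> K).
Hypotheses (ipL : forall a u v w, ip (a *: u + v) w = a * ip u w + ip v w)
  (ipC : forall u v, ip v u = cj (ip u v))
  (ip_ge0 : forall v, 0 <= ip v v)
  (ip_eq0 : forall v, ip v v = 0 -> v = 0)
  (ipcomp : forall s, vcauchy ip s -> exists l, vconv ip s l).
Variables (e : nat -> V).
Hypotheses (eon : forall i j, ip (e i) (e j) = (i == j)%:R)
  (eexp : forall v, vconv ip (fun n => \sum_(i < n) ip v (e i) *: e i) v).

Lemma ip0l w : ip 0 w = 0.
Proof.
have := ipL 1 0 0 w; rewrite scale1r mul1r addr0 => h.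
by apply: (@addrI _ (ip 0 w)); rewrite -h addr0.
Qed.

Lemma ipDl u v w : ip (u + v) w = ip u w + ip v w.
Proof. by have := ipL 1 u v w; rewrite scale1r mul1r. Qed.

Lemma ipZl a u w : ip (a *: u) w = a * ip u w.
Proof. by have := ipL a u 0 w; rewrite addr0 ip0l addr0. Qed.

Lemma ipNl u w : ip (- u) w = - ip u w.
Proof. by rewrite -scaleN1r ipZl mulN1r. Qed.

Lemma ipBl u v w : ip (u - v) w = ip u w - ip v w.
Proof. by rewrite ipDl ipNl. Qed.

Lemma ip0r w : ip w 0 = 0.
Proof. by rewrite ipC ip0l cj0. Qed.

Lemma ipDr u v w : ip u (v + w) = ip u v + ip u w.
Proof. by rewrite ipC ipDl cjD -!ipC. Qed.

Lemma ipZr a u w : ip u (a *: w) = cj a * ip u w.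
Proof. by rewrite ipC ipZl cjM -ipC. Qed.

Lemma ipNr u w : ip u (- w) = - ip u w.
Proof. by rewrite ipC ipNl cjN -ipC. Qed.

Lemma ipBr u v w : ip u (v - w) = ip u v - ip u w.
Proof. by rewrite ipDr ipNr. Qed.

Lemma ip_suml (I : Type) (r : seq I) (P : pred I) (F : I -> V) w :
  ip (\sum_(i <- r | P i) F i) w = \sum_(i <- r | P i) ip (F i) w.
Proof. exact: (big_morph (fun x => ip x w) (fun x y => ipDl x y w) (ip0l w)). Qed.

Lemma ip_sumr (I : Type) (r : seq I) (P : pred I) (F : I -> V) w :
  ip w (\sum_(i <- r | P i) F i) = \sum_(i <- r | P i) ip w (F i).
Proof. exact: (big_morph (fun x => ip w x) (fun x y => ipDr w x y) (ip0r w)). Qed.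

Definition Nv (x : V) : R := nK (nsq ip x).

Lemma nsq_emb x : nsq ip x = emb (Nv x).
Proof. by rewrite /Nv /nsq -ge0_emb. Qed.

Lemma Nv_ge0 x : 0 <= Nv x.
Proof. exact: nK_ge0. Qed.

Lemma NvZ a x : Nv (a *: x) = nK a ^+ 2 * Nv x.
Proof.
apply: emb_inj; rewrite -nsq_emb rmorphM -mulcj -nsq_emb /nsq.
by rewrite ipZl ipZr mulrA.
Qed.

Lemma NvN x : Nv (- x) = Nv x.
Proof. by rewrite -scaleN1r NvZ nKN nK1 expr1n mul1r. Qed.

Lemma NvB x y : Nv (x - y) = Nv (y - x).
Proof. by rewrite -NvN opprB. Qed.

Lemma Nv_par x y : Nv (x + y) + Nv (x - y) = 2 * Nv x + 2 * Nv y.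
Proof.
apply: emb_inj; rewrite !rmorphD !rmorphM /= rmorph_nat -!nsq_emb /nsq.
rewrite !ipDl !ipDr !ipNl !ipNr; ring.
Qed.

Lemma Nv_addle x y : Nv (x + y) <= 2 * Nv x + 2 * Nv y.
Proof. by rewrite -Nv_par lerDl Nv_ge0. Qed.

Lemma Nv_eq0 x : Nv x = 0 -> x = 0.
Proof. by move=> h; apply: ip_eq0; rewrite -/(nsq ip x) nsq_emb h rmorph0. Qed.

Lemma Nv0 : Nv 0 = 0.
Proof. by rewrite /Nv /nsq ip0l nK0. Qed.

Lemma Nv_e i : Nv (e i) = 1.
Proof. by rewrite /Nv /nsq eon eqxx nK1. Qed.

Lemma orth_tail (F : nat -> K) m n j : (n <= j)%N ->
  ip (\sum_(m <= k < n) F k *: e k) (e j) = 0.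
Proof.
move=> hn; rewrite ip_suml big_nat_cond big1 // => k /andP[/andP[_ hk] _].
by rewrite ipZl eon ltn_eqF ?mulr0 // (leq_trans hk hn).
Qed.

Lemma pyth (F : nat -> K) m n :
  nsq ip (\sum_(m <= k < n) F k *: e k) = emb (\sum_(m <= k < n) nK (F k) ^+ 2).
Proof.
elim: n => [|n IH]; first by rewrite !big_geq // /nsq ip0l rmorph0.
case: (leqP m n) => h; last by rewrite !big_geq // /nsq ip0l rmorph0.
rewrite !big_nat_recr //= /nsq !ipDl !ipDr -/(nsq ip _) IH.
have o := orth_tail F m n n (leqnn n).
move: o; set S := \sum_(m <= k < n) F k *: e k => o.
rewrite (ipC S (F n *: e n)) (ipZr (F n) S (e n)) o mulr0 cj0.
rewrite (ipZl (F n) (e n)) (ipZr (F n) (e n) (e n)) eon eqxx.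
by rewrite mulr1 add0r addr0 rmorphD -mulcj.
Qed.

Lemma Nv_pyth (F : nat -> K) m n :
  Nv (\sum_(m <= k < n) F k *: e k) = \sum_(m <= k < n) nK (F k) ^+ 2.
Proof.
by rewrite /Nv pyth nK_emb // sumr_ge0 // => i _; apply: sqr_ge0.
Qed.

Lemma bessel v m n : \sum_(m <= k < n) nK (ip v (e k)) ^+ 2 <= Nv v.
Proof.
set S := \sum_(m <= k < n) ip v (e k) *: e k.
set X := \sum_(m <= k < n) nK (ip v (e k)) ^+ 2.
have h1 : ip S v = emb X.
  rewrite ip_suml rmorph_sum; apply: eq_bigr => k _.
  by rewrite (ipZl (ip v (e k)) (e k) v) (ipC v (e k)) mulcj.
have h2 : ip v S = emb X.
  rewrite ip_sumr rmorph_sum; apply: eq_bigr => k _.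
  by rewrite (ipZr (ip v (e k)) v (e k)) mulrC mulcj.
have h3 : nsq ip (v - S) = nsq ip v - emb X.
  rewrite /nsq ipBl !ipBr h1 h2 -/(nsq ip S) pyth; ring.
have := ip_ge0 (v - S); rewrite -/(nsq ip _) h3 subr_ge0 nsq_emb emb_le //.
Qed.

Definition kconvR (s : nat -> K) (l : K) :=
  forall eps : R, 0 < eps -> exists N, forall n, (N <= n)%N -> nK (s n - l) < eps.
Definition kcauchyR (s : nat -> K) :=
  forall eps : R, 0 < eps -> exists N, forall m n, (N <= m)%N -> (N <= n)%N -> nK (s m - s n) < eps.
Definition vconvR (s : nat -> V) (l : V) :=
  forall eps : R, 0 < eps -> exists N, forall n, (N <= n)%N -> Nv (s n - l) < eps.
Definition vcauchyR (s : nat -> V) :=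
  forall eps : R, 0 < eps -> exists N, forall m n, (N <= m)%N -> (N <= n)%N -> Nv (s m - s n) < eps.

Lemma emb_gt0 r : (0 < emb r) = (0 < r).
Proof. by rewrite -(rmorph0 emb) emb_lt. Qed.

Lemma epsK (eps : K) : 0 < eps -> eps = emb (nK eps) /\ 0 < nK eps.
Proof.
move=> h; have h1 := ge0_emb eps (ltW h); split => //.
by rewrite -emb_gt0 -h1.
Qed.

Lemma kconv_R s l : kconv s l <-> kconvR s l.
Proof.
split=> h eps he.
  have [N HN] := h (emb eps) ltac:(by rewrite emb_gt0).
  by exists N => n hn; rewrite -emb_lt -normE HN.
have [e1 e2] := epsK _ he; have [N HN] := h _ e2.
by exists N => n hn; rewrite normE e1 emb_lt HN.
Qed.

Lemma vconv_R s l : vconv ip s l <-> vconvR s l.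
Proof.
split=> h eps he.
  have [N HN] := h (emb eps) ltac:(by rewrite emb_gt0).
  by exists N => n hn; rewrite -emb_lt -nsq_emb HN.
have [e1 e2] := epsK _ he; have [N HN] := h _ e2.
by exists N => n hn; rewrite nsq_emb e1 emb_lt HN.
Qed.

Lemma complete s : vcauchyR s -> exists l, vconvR s l.
Proof.
move=> h; have [l hl] : exists l, vconv ip s l.
  apply: ipcomp => eps he; have [e1 e2] := epsK _ he; have [N HN] := h _ e2.
  by exists N => m n hm hn; rewrite nsq_emb e1 emb_lt HN.
by exists l; apply/vconv_R.
Qed.

Lemma vconvR_uniq s l l' : vconvR s l -> vconvR s l' -> l = l'.
Proof.
move=> h h'; apply/eqP; rewrite -subr_eq0; apply/eqP; apply: Nv_eq0.
apply/eqP; rewrite eq_le Nv_ge0 andbT; apply: le_eps => eps he.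
have he4 : 0 < eps / 4 by rewrite divr_gt0.
have [N1 H1] := h _ he4; have [N2 H2] := h' _ he4.
have := H1 (maxn N1 N2) (leq_maxl _ _); have := H2 (maxn N1 N2) (leq_maxr _ _).
set x := s _ => a b.
have -> : l - l' = (x - l') + (- (x - l)) by rewrite opprB [RHS]addrC addrA subrK.
apply: (le_trans (Nv_addle _ _)); rewrite NvN add0r.
have -> : eps = 2 * (eps / 4) + 2 * (eps / 4) by field.
by rewrite lerD // ler_wpM2l // ltW.
Qed.

Lemma vconvR_lin (a : K) s t l m : vconvR s l -> vconvR t m ->
  vconvR (fun n => a *: s n + t n) (a *: l + m).
Proof.
move=> hs ht eps he.
set A := nK a ^+ 2 + 1.
have hA : 0 < A by rewrite ltr_wpDl ?sqr_ge0.
have [N1 H1] := hs (eps / (4 * A)) ltac:(by rewrite divr_gt0 // mulr_gt0).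
have [N2 H2] := ht (eps / 4) ltac:(by rewrite divr_gt0).
exists (maxn N1 N2) => n; rewrite geq_max => /andP[n1 n2].
have -> : a *: s n + t n - (a *: l + m) = a *: (s n - l) + (t n - m).
  by rewrite scalerBr opprD addrACA.
apply: (le_lt_trans (Nv_addle _ _)); rewrite NvZ.
have := H1 _ n1; have := H2 _ n2; have := Nv_ge0 (s n - l).
move=> g0 b c.
have h1 : nK a ^+ 2 * Nv (s n - l) <= A * Nv (s n - l).
  by rewrite ler_wpM2r // lerDl.
have h2 : A * Nv (s n - l) <= A * (eps / (4 * A)).
  by rewrite ler_wpM2l ?ltW.
have h3 : A * (eps / (4 * A)) = eps / 4 by field; rewrite gt_eqF.
lra.
Qed.

Lemma vconvR_const x : vconvR (fun _ => x) x.
Proof. by move=> eps he; exists 0%N => n _; rewrite subrr Nv0. Qed.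

Lemma vconvR_ext s t l : (forall n, s n = t n) -> vconvR s l -> vconvR t l.
Proof. by move=> E h eps he; have [N HN] := h _ he; exists N => n hn; rewrite -E HN. Qed.

Lemma kconvR_uniq s l l' : kconvR s l -> kconvR s l' -> l = l'.
Proof.
move=> h h'; apply/eqP; rewrite -subr_eq0; apply/eqP; apply: nK_eq0.
apply/eqP; rewrite eq_le nK_ge0 andbT; apply: le_eps => eps he.
have he2 : 0 < eps / 2 by rewrite divr_gt0.
have [N1 H1] := h _ he2; have [N2 H2] := h' _ he2.
have := H1 (maxn N1 N2) (leq_maxl _ _); have := H2 (maxn N1 N2) (leq_maxr _ _).
set x := s _ => a b.
have -> : l - l' = (x - l') + (- (x - l)) by rewrite opprB [RHS]addrC addrA subrK.
apply: (le_trans (nKD _ _)); rewrite nKN add0r.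
have -> : eps = eps / 2 + eps / 2 by field.
by rewrite lerD // ltW.
Qed.

Lemma kconvR_lin (a : K) s t l m : kconvR s l -> kconvR t m ->
  kconvR (fun n => a * s n + t n) (a * l + m).
Proof.
move=> hs ht eps he.
set A := nK a + 1.
have hA : 0 < A by rewrite ltr_wpDl ?nK_ge0.
have [N1 H1] := hs (eps / (2 * A)) ltac:(by rewrite divr_gt0 // mulr_gt0).
have [N2 H2] := ht (eps / 2) ltac:(by rewrite divr_gt0).
exists (maxn N1 N2) => n; rewrite geq_max => /andP[n1 n2].
have -> : a * s n + t n - (a * l + m) = a * (s n - l) + (t n - m).
  by rewrite mulrBr opprD addrACA.
apply: (le_lt_trans (nKD _ _)); rewrite nKM.
have := H1 _ n1; have := H2 _ n2; have := nK_ge0 (s n - l).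
move=> g0 b c.
have h1 : nK a * nK (s n - l) <= A * nK (s n - l).
  by rewrite ler_wpM2r // lerDl.
have h2 : A * nK (s n - l) <= A * (eps / (2 * A)).
  by rewrite ler_wpM2l ?ltW.
have h3 : A * (eps / (2 * A)) = eps / 2 by field; rewrite gt_eqF.
lra.
Qed.

Lemma kconvR_ev s l : (exists N, forall n, (N <= n)%N -> s n = l) -> kconvR s l.
Proof.
by move=> [N HN] eps he; exists N => n hn; rewrite HN // subrr nK0.
Qed.

Lemma kcomplete s : kcauchyR s -> exists l, kconvR s l.
Proof.
move=> h.
pose X n := s n *: e 0.
have NX m n : Nv (X m - X n) = nK (s m - s n) ^+ 2.
  by rewrite /X -scalerBl NvZ Nv_e mulr1.
have [lv hl] : exists lv, vconvR X lv.
  apply: complete => eps he.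
  have [d [d0 d1 d2]] := small_pos _ _ he.
  have [N HN] := h _ d0; exists N => m n hm hn; rewrite NX.
  have := HN _ _ hm hn; have := nK_ge0 (s m - s n) => g a.
  have : nK (s m - s n) ^+ 2 <= nK (s m - s n) by rewrite expr2 ler_piMr // ltW // (lt_le_trans a).
  lra.
exists (ip lv (e 0)) => eps he.
have [N HN] := hl (eps ^+ 2) ltac:(by rewrite exprn_gt0).
exists N => n hn; apply: sq_lt => //; [exact: nK_ge0|exact: ltW|].
have := bessel (X n - lv) 0 1; rewrite big_nat1.
rewrite ipBl /X (ipZl (s n) (e 0) (e 0)) eon eqxx mulr1 => hb.
exact: le_lt_trans hb (HN _ hn).
Qed.

Lemma vtail v : forall eps : R, 0 < eps -> exists N, forall m n, (N <= m)%N -> (m <= n)%N ->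
  \sum_(m <= i < n) nK (ip v (e i)) ^+ 2 < eps.
Proof.
move=> eps he.
have hv := eexp v; move/vconv_R: hv => hv.
have [N HN] := hv (eps / 4) ltac:(by rewrite divr_gt0).
exists N => m n hm hmn.
pose S n := \sum_(0 <= i < n) ip v (e i) *: e i.
have ES k : \sum_(i < k) ip v (e i) *: e i = S k by rewrite /S big_mkord.
rewrite -Nv_pyth (@sum_split _ _ m n hmn) -/(S n) -/(S m).
have -> : S n - S m = (S n - v) + (- (S m - v)) by rewrite opprB addrA subrK.
apply: (le_lt_trans (Nv_addle _ _)); rewrite NvN.
have := HN _ (leq_trans hm hmn); have := HN _ hm; rewrite !ES => a b.
lra.
Qed.
Variables (c : nat -> nat -> K) (Bc : K).
Hypothesis hc : forall i n, \sum_(k < n) `|c k i| ^+ 2 <= Bc.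

Definition Kc := nK Bc.

Lemma Kc_ge0 : 0 <= Kc.
Proof. exact: nK_ge0. Qed.

Lemma c_bound0 i n : \sum_(0 <= k < n) nK (c k i) ^+ 2 <= Kc.
Proof.
have hB : 0 <= Bc by have := hc i 0; rewrite big_ord0.
have := hc i n; rewrite (ge0_emb Bc hB) -/Kc.
rewrite (eq_bigr (fun k => emb (nK (c (nat_of_ord k) i) ^+ 2))); last first.
  by move=> k _; rewrite normE rmorphXn.
by rewrite -rmorph_sum emb_le big_mkord.
Qed.

Lemma c_bound i m n : \sum_(m <= k < n) nK (c k i) ^+ 2 <= Kc.
Proof.
case: (leqP m n) => h; last by rewrite big_geq ?Kc_ge0 // ltnW.
rewrite (@sum_split _ _ m n h) lerBlDr (le_trans (c_bound0 i n)) // lerDl.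
by apply: sumr_ge0 => k _; apply: sqr_ge0.
Qed.

Lemma c_le i k : nK (c k i) <= Kc + 1.
Proof.
have := c_bound i k k.+1; rewrite big_nat1 => h.
have := nK_ge0 (c k i); set x := nK (c k i) in h * => x0.
have : 0 <= (x - 1) ^+ 2 by apply: sqr_ge0.
have -> : (x - 1) ^+ 2 = x ^+ 2 - 2 * x + 1 by ring.
have := sqr_ge0 x; lra.
Qed.

Definition sc (v w : V) k n := \sum_(0 <= i < n) ip v (e i) * ip w (e i) * c k i.
Definition Pw (v w : V) i := nK (ip v (e i)) * nK (ip w (e i)).

Lemma Pw_ge0 v w i : 0 <= Pw v w i.
Proof. by rewrite mulr_ge0 ?nK_ge0. Qed.

Lemma sumP_ge0 v w m n : 0 <= \sum_(m <= i < n) Pw v w i.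
Proof. by apply: sumr_ge0 => i _; apply: Pw_ge0. Qed.

Lemma sumP_sq v w m n : (\sum_(m <= i < n) Pw v w i) ^+ 2 <= Nv v * Nv w.
Proof.
apply: (le_trans (CS_nat _ _ _ _ _ (fun i => nK_ge0 _) (fun i => nK_ge0 _))).
apply: ler_pM; try (by apply: sumr_ge0 => i _; apply: sqr_ge0); exact: bessel.
Qed.

Lemma Ptail v w eps : 0 < eps -> exists N, forall m n, (N <= m)%N -> (m <= n)%N ->
  \sum_(m <= i < n) Pw v w i < eps.
Proof.
move=> he; set W := Nv w + 1.
have hW : 0 < W by rewrite ltr_wpDl ?Nv_ge0.
have [N HN] := vtail v (eps ^+ 2 / W) ltac:(by rewrite divr_gt0 // exprn_gt0).
exists N => m n hm hmn; apply: sq_lt; [exact: sumP_ge0|exact: ltW|].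
apply: (le_lt_trans (CS_nat _ _ _ _ _ (fun i => nK_ge0 _) (fun i => nK_ge0 _))).
have h1 := HN _ _ hm hmn; have h2 := bessel w m n.
set tv := \sum_(m <= i < n) _ in h1 *; set tw := \sum_(m <= i < n) _ in h2 *.
have tv0 : 0 <= tv by apply: sumr_ge0 => i _; apply: sqr_ge0.
have tw0 : 0 <= tw by apply: sumr_ge0 => i _; apply: sqr_ge0.
have a1 : tv * tw <= tv * W by rewrite ler_wpM2l // (le_trans h2) // lerDl.
have a2 : tv * W < eps ^+ 2 / W * W by rewrite ltr_pM2r.
rewrite divfK ?gt_eqF // in a2.
exact: le_lt_trans a1 a2.
Qed.

Lemma sc_diff v w k m n : (m <= n)%N ->
  nK (sc v w k n - sc v w k m) <= (Kc + 1) * \sum_(m <= i < n) Pw v w i.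
Proof.
move=> h; rewrite /sc -(@sum_split _ _ m n h).
apply: (le_trans (nK_sum _ _ _)); rewrite mulr_sumr; apply: ler_sum => i _.
by rewrite !nKM mulrC ler_wpM2r ?Pw_ge0 ?c_le.
Qed.

Lemma sc_cauchy v w k : kcauchyR (sc v w k).
Proof.
move=> eps he.
have hK : 0 < Kc + 1 by rewrite ltr_wpDl ?Kc_ge0.
have [N HN] := Ptail v w (eps / (Kc + 1)) ltac:(by rewrite divr_gt0).
exists N => m n hm hn.
have key : forall m n, (N <= m)%N -> (m <= n)%N -> nK (sc v w k n - sc v w k m) < eps.
  move=> m' n' hm' hmn'; apply: (le_lt_trans (sc_diff _ _ _ _ _ hmn')).
  have := HN _ _ hm' hmn' => h.
  have : (Kc + 1) * \sum_(m' <= i < n') Pw v w i < (Kc + 1) * (eps / (Kc + 1)) by rewrite ltr_pM2l.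
  by rewrite [X in _ < X -> _]mulrC divfK ?gt_eqF.
case: (leqP m n) => h; first by rewrite nKB; apply: key.
by apply: key => //; apply: ltnW.
Qed.

Lemma coef_ex v w : exists a : nat -> K, forall k, kconvR (sc v w k) (a k).
Proof.
exists (fun k => proj1_sig (constructive_indefinite_description _ (kcomplete _ (sc_cauchy v w k)))).
by move=> k; case: (constructive_indefinite_description _ _).
Qed.

Lemma ell2_trunc v w N n : \sum_(0 <= k < N) nK (sc v w k n) ^+ 2 <= Kc * (Nv v * Nv w).
Proof.
set SP := \sum_(0 <= i < n) Pw v w i.
have hk : forall k, nK (sc v w k n) ^+ 2 <= SP * \sum_(0 <= i < n) Pw v w i * nK (c k i) ^+ 2.
  move=> k; apply: (le_trans _ (WCS_nat _ _ _ _ _ (Pw_ge0 v w) (fun i => nK_ge0 (c k i)))).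
  apply: sq_le; [exact: nK_ge0| by apply: sumr_ge0 => i _; rewrite mulr_ge0 ?Pw_ge0 ?nK_ge0|].
  apply: (le_trans (nK_sum _ _ _)); apply: ler_sum => i _.
  by rewrite !nKM.
apply: (le_trans (ler_sum _ (fun k _ => hk k))).
rewrite -mulr_sumr exchange_big /=.
have h1 : \sum_(0 <= j < n) \sum_(0 <= i < N) Pw v w j * nK (c i j) ^+ 2 <= SP * Kc.
  rewrite /SP mulr_suml; apply: ler_sum => j _.
  by rewrite -mulr_sumr ler_wpM2l ?Pw_ge0 ?c_bound.
have h2 := sumP_sq v w 0 n; rewrite -/SP in h2.
have SP0 : 0 <= SP by apply: sumP_ge0.
apply: (le_trans (ler_wpM2l SP0 h1)).
have -> : SP * (SP * Kc) = Kc * SP ^+ 2 by ring.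
by rewrite ler_wpM2l ?Kc_ge0.
Qed.

Lemma ell2 v w a : (forall k, kconvR (sc v w k) (a k)) ->
  forall N, \sum_(0 <= k < N) nK (a k) ^+ 2 <= 2 * (Kc * (Nv v * Nv w)).
Proof.
move=> ha N; apply: le_eps => eps he.
set d := eps / (2 * N%:R + 1).
have hN : 0 < 2 * N%:R + 1 :> R by rewrite ltr_wpDl // mulr_ge0.
have hd : 0 < d by rewrite divr_gt0.
have [del [d0 d1 d2]] := small_pos _ _ hd.
have hQ : forall k, exists n0, forall n, (n0 <= n)%N -> nK (a k - sc v w k n) < del.
  by move=> k; have [N0 HN0] := ha k del d0; exists N0 => n hn; rewrite nKB; exact: HN0.
have [n0 Hn0] := unif_fin _ hQ N.
rewrite -Nv_pyth.
set A := \sum_(0 <= k < N) a k *: e k.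
set B := \sum_(0 <= k < N) sc v w k n0 *: e k.
have -> : A = B + (A - B) by rewrite addrC subrK.
apply: (le_trans (Nv_addle _ _)).
have hB : Nv B <= Kc * (Nv v * Nv w) by rewrite /B Nv_pyth ell2_trunc.
have hAB : Nv (A - B) <= N%:R * del ^+ 2.
  rewrite /A /B -sumrB.
  rewrite (eq_bigr (fun k => (a k - sc v w k n0) *: e k)); last by move=> k _; rewrite scalerBl.
  rewrite Nv_pyth.
  apply: (le_trans (ler_sum_nat (G := fun _ => del ^+ 2) _)).
    move=> k /andP[_ hk]; apply: ltW.
    by rewrite ltr_sqr ?nnegrE ?nK_ge0 ?(ltW d0) // Hn0.
  by rewrite sumr_const_nat subn0 mulr_natl.
have hdel : del ^+ 2 <= del by rewrite expr2 ler_piMr // ltW.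
have hNd : 2 * N%:R * d + d = eps by rewrite /d; field; rewrite gt_eqF.
have N0 : 0 <= N%:R :> R by [].
have : N%:R * del ^+ 2 <= N%:R * d by rewrite ler_wpM2l // (le_trans hdel).
nra.
Qed.

Lemma prod_ex v w : exists p : (nat -> K) * V,
  [/\ forall k, kconvR (sc v w k) (p.1 k),
      vconvR (fun N => \sum_(0 <= k < N) p.1 k *: e k) p.2 &
      Nv p.2 <= 4 * (Kc * (Nv v * Nv w))].
Proof.
have [a ha] := coef_ex v w.
set B := 2 * (Kc * (Nv v * Nv w)).
pose s N := \sum_(0 <= k < N) nK (a k) ^+ 2.
have hsB N : s N <= B by apply: ell2.
have hsm N : s N <= s N.+1 by rewrite /s big_nat_recr //= lerDl sqr_ge0.
pose A N := \sum_(0 <= k < N) a k *: e k.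
have NA m n : (m <= n)%N -> Nv (A n - A m) = s n - s m.
  by move=> h; rewrite /A /s -(@sum_split _ _ m n h) Nv_pyth (@sum_split _ _ m n h).
have [g hg] : exists g, vconvR A g.
  apply: complete => eps he.
  have [N HN] := mono_cauchy _ _ _ hsm hsB _ he.
  exists N => m n hm hn; case: (leqP m n) => h.
    by rewrite NvB NA // HN.
  by rewrite NA ?HN // ltnW.
exists (a, g); split => //=.
apply: le_eps => eps he.
have [N HN] := hg (eps / 2) ltac:(by rewrite divr_gt0).
have -> : g = A N + (- (A N - g)) by rewrite opprB addrC subrK.
apply: (le_trans (Nv_addle _ _)); rewrite NvN.
have h1 : Nv (A N) <= B by rewrite /A Nv_pyth hsB.
have h2 := HN N (leqnn N).
rewrite /B in h1; lra.
Qed.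
Lemma kconvR_ext s t l : (forall n, s n = t n) -> kconvR s l -> kconvR t l.
Proof. by move=> E h eps he; have [N HN] := h _ he; exists N => n hn; rewrite -E HN. Qed.

Definition prodP v w := proj1_sig (constructive_indefinite_description _ (prod_ex v w)).
Definition prodF v w := (prodP v w).2.
Definition coefF v w := (prodP v w).1.

Lemma prodP_spec v w :
  [/\ forall k, kconvR (sc v w k) (coefF v w k),
      vconvR (fun N => \sum_(0 <= k < N) coefF v w k *: e k) (prodF v w) &
      Nv (prodF v w) <= 4 * (Kc * (Nv v * Nv w))].
Proof. by rewrite /coefF /prodF /prodP; case: (constructive_indefinite_description _ _). Qed.

Lemma prod_char v w a g : (forall k, kconvR (sc v w k) (a k)) ->
  vconvR (fun N => \sum_(0 <= k < N) a k *: e k) g -> prodF v w = g.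
Proof.
move=> ha hg; have [h1 h2 _] := prodP_spec v w.
have ea k : coefF v w k = a k by apply: (kconvR_uniq _ _ _ (h1 k) (ha k)).
apply: (vconvR_uniq _ _ _ _ hg); apply: (vconvR_ext _ _ _ _ h2) => N.
by apply: eq_bigr => k _; rewrite ea.
Qed.

Lemma sum_delta (f : nat -> K) i n : (i < n)%N -> (forall j, j != i -> f j = 0) ->
  \sum_(0 <= j < n) f j = f i.
Proof.
move=> hi hf; elim: n hi => [//|n IH] hi.
rewrite big_nat_recr //=; case: (ltnP i n) => h.
  by rewrite IH // (hf n (negbT (gtn_eqF h))) addr0.
have -> : i = n by apply/eqP; rewrite eqn_leq h -ltnS hi.
rewrite big_nat_cond big1 ?add0r // => j /andP[/andP[_ hj] _].
by rewrite (hf j (negbT (ltn_eqF (leq_trans hj h)))).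

Qed.

Lemma sc_lin_l a u v w k n : sc (a *: u + v) w k n = a * sc u w k n + sc v w k n.
Proof.
rewrite /sc mulr_sumr -big_split /=; apply: eq_bigr => i _.
by rewrite ipL; ring.
Qed.

Lemma sc_lin_r a u v w k n : sc u (a *: v + w) k n = a * sc u v k n + sc u w k n.
Proof.
rewrite /sc mulr_sumr -big_split /=; apply: eq_bigr => i _.
by rewrite ipL; ring.
Qed.

Lemma vsum_lin a (x y : nat -> K) N :
  \sum_(0 <= k < N) (a * x k + y k) *: e k =
  a *: \sum_(0 <= k < N) x k *: e k + \sum_(0 <= k < N) y k *: e k.
Proof.
rewrite scaler_sumr -big_split /=; apply: eq_bigr => k _.
by rewrite scalerDl scalerA.
Qed.

Lemma prod_lin_l a u v w : prodF (a *: u + v) w = a *: prodF u w + prodF v w.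
Proof.
have [hu1 hu2 _] := prodP_spec u w; have [hv1 hv2 _] := prodP_spec v w.
apply: (prod_char _ _ (fun k => a * coefF u w k + coefF v w k)).
  move=> k; apply: (kconvR_ext _ _ _ (fun n => esym (sc_lin_l a u v w k n))).
  exact: kconvR_lin.
apply: (vconvR_ext _ _ _ (fun N => esym (vsum_lin _ _ _ N))).
exact: vconvR_lin.
Qed.

Lemma prod_lin_r a u v w : prodF u (a *: v + w) = a *: prodF u v + prodF u w.
Proof.
have [hu1 hu2 _] := prodP_spec u v; have [hv1 hv2 _] := prodP_spec u w.
apply: (prod_char _ _ (fun k => a * coefF u v k + coefF u w k)).
  move=> k; apply: (kconvR_ext _ _ _ (fun n => esym (sc_lin_r a u v w k n))).
  exact: kconvR_lin.
apply: (vconvR_ext _ _ _ (fun N => esym (vsum_lin _ _ _ N))).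
exact: vconvR_lin.
Qed.

Lemma prod_ee i : vconvR (fun N => \sum_(0 <= k < N) c k i *: e k) (prodF (e i) (e i)).
Proof.
have [h1 h2 _] := prodP_spec (e i) (e i).
have ea k : coefF (e i) (e i) k = c k i.
  apply: (kconvR_uniq _ _ _ (h1 k)); apply: kconvR_ev; exists i.+1 => n hn.
  rewrite /sc (@sum_delta _ i) //; first by rewrite eon eqxx mulr1 mul1r.
  by move=> j hj; rewrite eon eq_sym (negbTE hj) mulr0 mul0r.
apply: (vconvR_ext _ _ _ _ h2) => N; apply: eq_bigr => k _; by rewrite ea.
Qed.

Lemma prod_eij i j : i != j -> prodF (e i) (e j) = 0.
Proof.
move=> hij; apply: (prod_char _ _ (fun _ => 0)).
  move=> k; apply: kconvR_ev; exists 0%N => n _.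
  rewrite /sc big1 // => l _.
  case: (eqVneq i l) => [<-|h]; first by rewrite !eon eqxx eq_sym (negbTE hij) mulr0 mul0r.
  by rewrite !eon (negbTE h) !mul0r.
apply: (vconvR_ext _ _ _ _ (vconvR_const 0)) => N.
by rewrite big1 // => k _; rewrite scale0r.
Qed.

Lemma prod_cont v : exists M : K, 0 < M /\ forall w, nsq ip (prodF v w) <= M ^+ 2 * nsq ip w.
Proof.
set x := 4 * (Kc * Nv v).
have x0 : 0 <= x by rewrite !mulr_ge0 ?Kc_ge0 ?Nv_ge0.
exists (emb (x + 1)); split; first by rewrite emb_gt0 ltr_wpDl.
move=> w; have [_ _ h3] := prodP_spec v w.
rewrite !nsq_emb -rmorphXn -rmorphM emb_le.
apply: (le_trans h3).
have -> : 4 * (Kc * (Nv v * Nv w)) = x * Nv w by rewrite /x; ring.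
rewrite ler_wpM2r ?Nv_ge0 //.
have : 0 <= x ^+ 2 + x + 1 by rewrite !addr_ge0 ?sqr_ge0.
have -> : (x + 1) ^+ 2 = x + (x ^+ 2 + x + 1) by ring.
by move=> h; rewrite lerDl.
Qed.

Lemma main_sec : exists prod : V -> V -> V,
      (forall v w : V, exists a : nat -> K,
         (forall k : nat,
            kconv (fun n => \sum_(i < n) ip v (e i) * ip w (e i) * c k i) (a k)) /\
         vconv ip (fun n => \sum_(k < n) a k *: e k) (prod v w)) /\
      hilbert_evolution_algebra cj ip prod e c.
Proof.
exists prodF; split.
  move=> v w; exists (coefF v w); have [h1 h2 _] := prodP_spec v w; split.
    move=> k; apply/kconv_R; apply: (kconvR_ext _ _ _ _ (h1 k)) => n.
    by rewrite /sc big_mkord.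
  apply/vconv_R; apply: (vconvR_ext _ _ _ _ h2) => n; by rewrite big_mkord.
split.
- by split.
- by split.
- split.
  + by move=> a u v w; apply: prod_lin_l.
  + by move=> a u v w; apply: prod_lin_r.
  + move=> i; apply/vconv_R; apply: (vconvR_ext _ _ _ _ (prod_ee i)) => n.
    by rewrite big_mkord.
  + exact: prod_eij.
  + exact: prod_cont.
Qed.
End Gen.

Lemma gen_thm (R : realType) (K : numFieldType) (emb : {rmorphism R -> K}) (nK : K -> R) (cj : K -> K) :
  (forall x, `|x| = emb (nK x)) ->
  (forall r s, (emb r <= emb s) = (r <= s)) ->
  (forall r s, (emb r < emb s) = (r < s)) ->
  (forall x y, cj (x + y) = cj x + cj y) ->
  (forall x y, cj (x * y) = cj x * cj y) ->
  (forall x, x * cj x = emb (nK x ^+ 2)) ->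
  forall (V : lmodType K) (ip : V -> V -> K), theorem_for cj ip.
Proof.
move=> h1 h2 h3 h4 h5 h6 V ip e c [ipL ipC ip0 ipe ipc] [eon eexp] [B hB].
exact: (main_sec _ _ _ _ _ h1 h2 h3 h4 h5 h6 _ _ ipL ipC ip0 ipe ipc _ eon eexp _ _ hB).
Qed.

Theorem mainTheorem2 (R : realType) :
  (forall V : lmodType R, forall ip : V -> V -> R,
     theorem_for (fun x : R => x) ip) /\
  (forall V : lmodType R[i], forall ip : V -> V -> R[i],
     theorem_for (fun x : R[i] => x^*) ip).
Proof.
split.
- move=> V ip; apply: (@gen_thm R R idfun (fun x => `|x|)) => //.
  by move=> x /=; rewrite real_normK ?num_real // expr2.
- move=> V ip; apply: (@gen_thm R R[i] (real_complex R) (fun z => complex.Re `|z|) (fun x => x^*%C)).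
  + by move=> x; apply/esym; apply: RRe_real; exact: normr_real.
  + by move=> r s; rewrite lecR.
  + by move=> r s; rewrite ltcR.
  + by move=> x y; rewrite rmorphD.
  + by move=> x y; rewrite rmorphM.
  + move=> x; rewrite rmorphXn.
    rewrite -sqr_normc; congr (_ ^+ 2); apply/esym; apply: RRe_real; exact: normr_real.
Qed.
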